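(* Let $\sigma=(a_1,\ldots,a_s)$ be a partition of $r$ and let $H=H(n,r,q\mid\sigma)$ with $n\ge s$ and $q\ge r$. If $r\mid q$, then $H$ has a perfect matching.
   Context: A $\sigma$-hypergraph $H=H(n,r,q\mid\sigma)$, for a partition $\sigma=(a_1,\ldots,a_s)$ of $r$ with $s$ parts, is the $r$-uniform hypergraph whose vertex set is the disjoint union of $n$ classes $V_1,\ldots,V_n$, each of size $q$; an $r$-subset $K$ of vertices is an edge iff the multiset of non-zero values $|K\cap V_i|$ equals $\sigma$. A perfect matching is a set of pairwise vertex-disjoint edges covering every vertex. *)

(* Defs.v *)
From mathcomp Require Import all_boot.
Set Implicit Arguments. Unset Strict Implicit. Unset Printing Implicit Defensive.

(* Vertices of H(n,r,q|sigma): pairs (i, j) with i : 'I_n the class index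
   and j : 'I_q the position inside the class V_i. *)
Definition sigvert (n q : nat) := ('I_n * 'I_q)%type.

Definition vclass (n q : nat) (i : 'I_n) : {set sigvert n q} :=
  [set v | v.1 == i].

Definition is_partition (sigma : seq nat) (r : nat) : Prop :=
  all (fun a => 0 < a) sigma /\ sumn sigma = r.

Definition sigma_edge (n r q : nat) (sigma : seq nat) (K : {set sigvert n q}) : bool :=
  (#|K| == r) &&
  perm_eq [seq c <- [seq #|K :&: @vclass n q i| | i <- enum 'I_n] | c != 0] sigma.

Definition perfect_matching (n r q : nat) (sigma : seq nat)
    (M : {set {set sigvert n q}}) : Prop :=
  [/\ forall K, K \in M -> @sigma_edge n r q sigma K,
      trivIset M &
      cover M = [set: sigvert n q]].

(* Main.v *)
Require Import Defs.
From mathcomp Require Import all_boot zify.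

Lemma mod2 x n : x < n + n -> x %% n = if x < n then x else x - n.
Proof.
move=> h; case: ltnP => h2; first by rewrite modn_small.
by rewrite -{1}(subnK h2) modnDr modn_small //; lia.
Qed.

Lemma modeq a i c n : a < n -> i < n -> c < n ->
  ((i + n - a) %% n == c) = (a == (i + n - c) %% n).
Proof.
move=> ha hi hc; rewrite (@mod2 (i + n - a) n); last lia.
rewrite (@mod2 (i + n - c) n); last lia.
case: ifP => h1; case: ifP => h2; apply/eqP/eqP; lia.
Qed.

Definition Lof (sigma : seq nat) :=
  flatten [seq nseq (nth 0 sigma k) k | k <- iota 0 (size sigma)].

Lemma sumn_ind (f : nat -> nat) d a b :
  sumn [seq (k == d) * f k | k <- iota a b] = (a <= d < a + b) * f d.
Proof.
elim: b a => [|b IH] a /=; first by rewrite addn0; case: (leqP a d) => h //; rewrite ltnNge h.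
rewrite IH; case: (eqVneq a d) => [->|ne].
  rewrite ltnn /= leqnn. have -> : d < d + b.+1 by lia. by rewrite mul1n addn0.
by rewrite mul0n add0n addSnnS ltn_neqAle ne.
Qed.

Lemma count_Lof sigma d : count (pred1 d) (Lof sigma) = nth 0 sigma d.
Proof.
rewrite /Lof count_flatten -map_comp.
rewrite (eq_map (g := fun k => (k == d) * nth 0 sigma k)); last first.
  by move=> k /=; rewrite count_nseq /= eq_sym.
rewrite sumn_ind add0n /=; case: ltnP => h; first by rewrite mul1n.
by rewrite nth_default.
Qed.

Lemma size_Lof sigma : size (Lof sigma) = sumn sigma.
Proof.
rewrite /Lof size_flatten /shape -map_comp.
rewrite (eq_map (g := nth 0 sigma)); last by move=> k /=; rewrite size_nseq.
by have := mkseq_nth 0 sigma; rewrite /mkseq => ->.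
Qed.

Lemma mem_Lof sigma x : x \in Lof sigma -> x < size sigma.
Proof.
by move/flatten_mapP => [k]; rewrite mem_iota add0n => /andP[_ hk] /nseqP [-> _].
Qed.

Lemma card_ordP q (P : nat -> bool) :
  #|[set j : 'I_q | P j]| = count P (iota 0 q).
Proof.
rewrite cardE /enum_mem size_filter -enumT -val_enum_ord count_map.
by apply: eq_count => j; rewrite /= inE.
Qed.

Lemma card_col n q (K : {set sigvert n q}) (i : 'I_n) (P : nat -> bool) :
  (forall j : 'I_q, ((i, j) \in K) = P j) ->
  #|K :&: @vclass n q i| = count P (iota 0 q).
Proof.
move=> hP; rewrite -card_ordP.
have -> : K :&: @vclass n q i = (pair i) @: [set j : 'I_q | P j].
  apply/setP => [[i' j]]; rewrite !inE; apply/andP/imsetP.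
    by move=> [hK /eqP /= hi]; subst i'; exists j; rewrite // inE -hP.
  by move=> [j' hj [-> ->]]; rewrite hP eqxx; move: hj; rewrite inE.
by apply: card_imset => a b [].
Qed.

Lemma card_sum n q (K : {set sigvert n q}) :
  #|K| = sumn [seq #|K :&: @vclass n q i| | i <- enum 'I_n].
Proof.
rewrite sumnE big_map big_enum /= -sum1_card.
rewrite (partition_big (fun v : sigvert n q => v.1) predT) //=.
apply: eq_bigr => i _; rewrite -sum1_card; apply: eq_bigl => v.
by rewrite !inE.
Qed.

Lemma rot_perm n c : 0 < n -> c < n ->
  perm_eq [seq (i + n - c) %% n | i <- iota 0 n] (iota 0 n).
Proof.
move=> hn hc.
have U : uniq [seq (i + n - c) %% n | i <- iota 0 n].
  rewrite map_inj_in_uniq ?iota_uniq // => a b; rewrite !mem_iota !add0n => ha hb.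
  rewrite (@mod2 (a + n - c) n); last lia.
  rewrite (@mod2 (b + n - c) n); last lia.
  case: ifP => h1; case: ifP => h2; lia.
apply: (uniq_perm U (iota_uniq 0 n)).
have [] := uniq_min_size U (s2 := iota 0 n) => //.
- by move=> y /mapP [a _ ->]; rewrite mem_iota add0n ltn_pmod.
- by rewrite !size_map size_iota.
Qed.

Lemma map_nth_iota (sigma : seq nat) n : size sigma <= n ->
  map (nth 0 sigma) (iota 0 n) = sigma ++ nseq (n - size sigma) 0.
Proof.
move=> h; rewrite -(subnKC h) iotaD map_cat add0n.
have -> : map (nth 0 sigma) (iota 0 (size sigma)) = sigma by exact: (mkseq_nth 0 sigma).
congr (_ ++ _); rewrite addKn.
have -> : map (nth 0 sigma) (iota (size sigma) (n - size sigma)) = map (fun _ => 0) (iota (size sigma) (n - size sigma)).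
  by apply/eq_in_map => k; rewrite mem_iota => /andP[hk _]; rewrite nth_default.
set b := n - size sigma; set a := size sigma; clearbody b a.
by elim: b a => //= b IH a; rewrite IH.
Qed.

Theorem lemma3p3 (n r q : nat) (sigma : seq nat) :
  is_partition sigma r ->
  size sigma <= n ->
  r <= q ->
  r %| q ->
  exists M : {set {set sigvert n q}}, @perfect_matching n r q sigma M.
Proof.
move=> [hpos hsum] hsn hrq hdvd.
pose L := Lof sigma.
pose g := fun v : sigvert n q => ((v.1 + n - nth 0 L (v.2 %% r)) %% n, v.2 %/ r).
exists (preim_partition g [set: sigvert n q]).
have /and3P [hc ht _] := preim_partitionP g [set: sigvert n q].
split; [ | exact ht | apply/eqP; exact hc].
rewrite /preim_partition /equivalence_partition.
move=> K /imsetP [x _ ->] {K hc ht}.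
have hn : 0 < n by have := ltn_ord x.1; lia.
have hq : 0 < q by have := ltn_ord x.2; lia.
have hr : 0 < r.
  rewrite lt0n; apply/negP => /eqP r0; move: hdvd; rewrite r0 dvd0n; lia.
have hqm := divnK hdvd.
pose m := q %/ r.
pose c := (g x).1. pose t := (g x).2.
have hx : g x = (c, t) by [].
have hcn : c < n by rewrite /c /= ltn_pmod.
have tm : t < m by rewrite /t /= ltn_divLR // hqm.
have htq : t * r + r <= q.
  have : t.+1 * r <= m * r by rewrite leq_mul2r tm orbT.
  rewrite mulSn /m hqm; lia.
have hL : size L = r by rewrite /L size_Lof.
have A : forall i : 'I_n, #|[set y in [set: sigvert n q] | g x == g y] :&: @vclass n q i|
           = nth 0 sigma ((i + n - c) %% n).
  move=> i.
  rewrite (@card_col n q _ i (fun j => ((i + n - nth 0 L (j %% r)) %% n == c) && (j %/ r == t))); last first.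
    by move=> j; rewrite !inE hx /g /= xpair_eqE eq_sym [t == _]eq_sym.
  rewrite -(subnKC htq) iotaD count_cat iotaD count_cat !add0n.
  have -> : count (fun j => ((i + n - nth 0 L (j %% r)) %% n == c) && (j %/ r == t)) (iota 0 (t * r)) = 0.
    rewrite (eq_in_count (a2 := pred0)) ?count_pred0 // => j; rewrite mem_iota => /andP[_ hj] /=.
    have hlt : j %/ r < t by rewrite ltn_divLR.
    by rewrite (ltn_eqF hlt) andbF.
  have -> : count (fun j => ((i + n - nth 0 L (j %% r)) %% n == c) && (j %/ r == t)) (iota (t * r + r) (q - (t * r + r))) = 0.
    rewrite (eq_in_count (a2 := pred0)) ?count_pred0 // => j; rewrite mem_iota => /andP[hj _] /=.
    have hlt : t < j %/ r by rewrite leq_divRL // mulSn addnC.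
    by rewrite (gtn_eqF hlt) andbF.
  rewrite add0n addn0.
  have -> : iota (t * r) r = map (addn (t * r)) (iota 0 r) by rewrite -iotaDl addn0.
  rewrite count_map.
  rewrite (eq_in_count (a2 := fun p => nth 0 L p == (i + n - c) %% n)); last first.
    move=> p; rewrite mem_iota add0n => hp /=.
    rewrite modnMDl (modn_small hp) divnMDl // (divn_small hp) addn0 eqxx andbT.
    apply: modeq => //.
    have : nth 0 L p \in L by rewrite mem_nth // hL.
    move/mem_Lof; lia.
  rewrite -hL -count_Lof -/L.
  have E : map (nth 0 L) (iota 0 (size L)) = L by exact: (mkseq_nth 0 L).
  by rewrite -{3}E count_map.
set K := [set y in [set: sigvert n q] | g x == g y].
set S := [seq #|K :&: @vclass n q i| | i <- enum 'I_n].
have hS : S = map (nth 0 sigma) [seq (i + n - c) %% n | i <- iota 0 n].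
  rewrite /S (eq_map A) -val_enum_ord -!map_comp.
  by apply: eq_map.
have hP : perm_eq S (sigma ++ nseq (n - size sigma) 0).
  by rewrite hS -map_nth_iota //; apply: perm_map; apply: rot_perm.
apply/andP; split.
  by rewrite card_sum -/S (perm_sumn hP) sumn_cat sumn_nseq mul0n addn0 hsum.
apply: (perm_trans (perm_filter _ hP)).
rewrite filter_cat filter_nseq /= cats0.
have -> : [seq c0 <- sigma | c0 != 0] = sigma.
  apply/all_filterP; apply: sub_all hpos => a; by rewrite lt0n.
exact: perm_refl.
Qed.
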